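(* Let $k\ge1$, let $\Gamma=\mathbb{Z}_2\,\mathrm{wr}\,\mathbb{Z}^k=\Sigma\rtimes_\alpha\mathbb{Z}^k$, let $\phi:\Gamma\to\Gamma$ be an automorphism, let $\phi'=\phi|_\Sigma$ and let $\overline{\phi}:\mathbb{Z}^k\to\mathbb{Z}^k$ be the automorphism induced on $\Gamma/\Sigma\cong\mathbb{Z}^k$. Let $x_0\in\mathbb{Z}^k$ be the element with $\phi'(\delta_0)=\delta_{x_0}$ (so that $\phi'(\delta_y)=\delta_{\overline{\phi}(y)+x_0}$ for all $y\in\mathbb{Z}^k$). If $\delta_{x_1}$ and $\delta_{x_2}$ ($x_1,x_2\in\mathbb{Z}^k$) belong to the same Reidemeister class of $\phi'$, then for some integer $t\ge0$ either $$\overline{\phi}^t(x_1)+\overline{\phi}^{t-1}(x_0)+\dots+\overline{\phi}(x_0)+x_0=x_2$$ or $$\overline{\phi}^t(x_2)+\overline{\phi}^{t-1}(x_0)+\dots+\overline{\phi}(x_0)+x_0=x_1$$ (for $t=0$ the sum of the $x_0$-terms is empty).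
   Context: $\mathbb{Z}_2\,\mathrm{wr}\,\mathbb{Z}^k$ is $\Sigma\rtimes_\alpha\mathbb{Z}^k$ with $\Sigma=\bigoplus_{x\in\mathbb{Z}^k}(\mathbb{Z}_2)_{(x)}$ (finitely supported), $\delta_x$ the nontrivial element of $(\mathbb{Z}_2)_{(x)}$, and $\alpha(y)(\delta_x)=\delta_{y+x}$. $\Sigma$ is characteristic (the torsion subgroup), so $\phi$ restricts to $\phi'$ on $\Sigma$ and induces $\overline\phi$ on the quotient $\mathbb{Z}^k$; $\phi'$ maps each $\delta_0$ to a single $\delta_{x_0}$. Reidemeister classes of an automorphism $\psi$ of a group $G$ are the classes of the relation $g\sim hg\psi(h^{-1})$. *)

(* Defs.v *)
From HB Require Import structures.
From mathcomp Require Import all_boot all_order all_algebra.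
From mathcomp Require Import finmap.
Set Implicit Arguments. Unset Strict Implicit. Unset Printing Implicit Defensive.
Import GRing.Theory.
Local Open Scope ring_scope.
Local Open Scope fset_scope.

Notation Zk k := 'rV[int]_k.

(* Sigma = finitely supported functions Z^k -> Z_2, represented by their
   (finite) support; the group law is symmetric difference. *)
Definition Sigma (k : nat) := {fset Zk k}.

Definition symdiff (k : nat) (A B : Sigma k) : Sigma k := (A `\` B) `|` (B `\` A).

Definition alpha (k : nat) (y : Zk k) (A : Sigma k) : Sigma k :=
  [fset (y + x)%R | x in A].

Definition Gamma (k : nat) := (Sigma k * Zk k)%type.

Definition gmul (k : nat) (a b : Gamma k) : Gamma k :=
  (symdiff a.1 (alpha a.2 b.1), (a.2 + b.2)%R).
Definition gone (k : nat) : Gamma k := (fset0, 0%R).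
Definition ginv (k : nat) (a : Gamma k) : Gamma k :=
  (alpha (- a.2)%R a.1, (- a.2)%R).

Definition ofSigma (k : nat) (A : Sigma k) : Gamma k := (A, 0%R).

Definition delta (k : nat) (x : Zk k) : Gamma k := ofSigma [fset x].

Definition is_aut (k : nat) (phi : Gamma k -> Gamma k) : Prop :=
  bijective phi /\ forall a b, phi (gmul a b) = gmul (phi a) (phi b).

(* the automorphism induced on Gamma / Sigma = Z^k (quotient map = 2nd projection) *)
Definition phibar (k : nat) (phi : Gamma k -> Gamma k) (y : Zk k) : Zk k :=
  (phi (fset0, y)).2.

Definition reid_rel_Sigma (k : nat) (phi : Gamma k -> Gamma k) (g g' : Gamma k) : Prop :=
  exists H : Sigma k, g' = gmul (gmul (ofSigma H) g) (phi (ginv (ofSigma H))).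

(* Reidemeister class relation: the equivalence closure (the relation above is
   already an equivalence relation, but we take the closure to be safe). *)
Inductive same_reid_class (k : nat) (phi : Gamma k -> Gamma k) : Gamma k -> Gamma k -> Prop :=
  | srcl_step g g' : reid_rel_Sigma phi g g' -> same_reid_class phi g g'
  | srcl_refl g : same_reid_class phi g g
  | srcl_sym g g' : same_reid_class phi g g' -> same_reid_class phi g' g
  | srcl_trans g g' g'' : same_reid_class phi g g' -> same_reid_class phi g' g'' ->
      same_reid_class phi g g''.

(* Main.v *)
Require Import Defs.
From HB Require Import structures.
From mathcomp Require Import all_boot all_order all_algebra.
From mathcomp Require Import finmap.

Set Implicit Arguments. Unset Strict Implicit.
Import GRing.Theory Num.Theory.
Local Open Scope fset_scope.
From mathcomp Require Import all_boot finmap.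
Local Open Scope ring_scope.


Lemma alpha0 k (A : Sigma k) : alpha 0 A = A.
Proof. apply/fsetP => x; apply/imfsetP/idP => [[y yA ->]|xA]; first by rewrite add0r.
by exists x => //; rewrite add0r. Qed.

Lemma alpha_set0 k (y : Zk k) : alpha y fset0 = fset0.
Proof. by rewrite /alpha imfset0. Qed.

Lemma alpha1 k (y x : Zk k) : alpha y [fset x] = [fset (y + x)%R].
Proof. by rewrite /alpha imfset_fset1. Qed.

Lemma alphaK k (y : Zk k) A : alpha y (alpha (-y) A) = A.
Proof. apply/fsetP => x; apply/imfsetP/idP => [[z /imfsetP[w wA ->] ->]|xA].
  by rewrite addrA subrr add0r.
by exists (-y + x); [apply/imfsetP; exists x | rewrite addrA subrr add0r]. Qed.

Lemma in_symdiff k (A B : Sigma k) x : (x \in symdiff A B) = (x \in A) (+) (x \in B).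
Proof. by rewrite /symdiff in_fsetU !in_fsetD; case: (x \in A); case: (x \in B). Qed.

Lemma symdiff0l k (A : Sigma k) : symdiff fset0 A = A.
Proof. by apply/fsetP=> x; rewrite in_symdiff in_fset0. Qed.
Lemma symdiff0r k (A : Sigma k) : symdiff A fset0 = A.
Proof. by apply/fsetP=> x; rewrite in_symdiff in_fset0 addbF. Qed.
Lemma symdiffvv k (A : Sigma k) : symdiff A A = fset0.
Proof. by apply/fsetP=> x; rewrite in_symdiff in_fset0 addbb. Qed.
Lemma symdiffA k (A B C : Sigma k) : symdiff A (symdiff B C) = symdiff (symdiff A B) C.
Proof. by apply/fsetP=> x; rewrite !in_symdiff addbA. Qed.
Lemma symdiffC k (A B : Sigma k) : symdiff A B = symdiff B A.
Proof. by apply/fsetP=> x; rewrite !in_symdiff addbC. Qed.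

Lemma phi1 k (phi : Gamma k -> Gamma k) : is_aut phi -> phi (gone k) = gone k.
Proof.
move=> [_ hm]. have := hm (gone k) (gone k).
have -> : gmul (gone k) (gone k) = gone k.
  by rewrite /gmul /gone /= alpha_set0 symdiff0l addr0.
case: (phi (gone k)) => A y [] eA ey.
have y0 : y = 0 by apply: (@addrI _ y); rewrite addr0.
subst y. by rewrite alpha0 symdiffvv in eA; rewrite /gone -eA.
Qed.

Lemma phiSigma k (phi : Gamma k -> Gamma k) A : is_aut phi -> (phi (A, 0)).2 = 0.
Proof.
move=> hphi; have [_ hm] := hphi. have := hm (A,0) (A,0).
have -> : gmul (A,0) (A,0) = gone k by rewrite /gmul /gone /= alpha0 symdiffvv addr0.
rewrite phi1 //; case: (phi (A,0)) => B z [] _ /= ez.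
apply/matrixP => i j; move/matrixP: ez => /(_ i j); rewrite !mxE => H.
have := mulrn_eq0 (z i j) 2; rewrite mulr2n -H eqxx /= => /esym/eqP; done.
Qed.

Lemma phibarD k (phi : Gamma k -> Gamma k) a b : is_aut phi ->
  phibar phi (a + b) = phibar phi a + phibar phi b.
Proof.
move=> [_ hm]; rewrite /phibar.
have -> : ((fset0, a + b) : Gamma k) = gmul (fset0, a) (fset0, b).
  by rewrite /gmul /= alpha_set0 symdiff0l.
by rewrite hm.
Qed.

Lemma phibar0 k (phi : Gamma k -> Gamma k) : is_aut phi -> phibar phi 0 = 0.
Proof. by move=> h; rewrite /phibar -/(gone k) phi1. Qed.

Lemma phi_delta k (phi : Gamma k -> Gamma k) x0 y : is_aut phi ->
  phi (delta 0) = delta x0 -> phi (delta y) = delta (phibar phi y + x0).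
Proof.
move=> hphi hx0; have [_ hm] := hphi.
have E : delta y = gmul (gmul (fset0, y) (delta 0)) (fset0, -y).
  by rewrite /gmul /delta /ofSigma /= alpha_set0 alpha1 symdiff0l symdiff0r addr0 subrr.
have I : gmul (phi (fset0, y)) (phi (fset0, -y)) = gone k.
  by rewrite -hm /gmul /= alpha_set0 symdiff0l subrr phi1.
rewrite E !hm hx0 /phibar.
move: I; case: (phi (fset0, y)) => B z; case: (phi (fset0, -y)) => C w.
rewrite /gmul /gone /= => -[eB ew].
have -> : w = -z by apply/eqP; rewrite -addr_eq0 addrC ew.
have eC : alpha z C = B.
  by apply/fsetP => u; move/fsetP: eB => /(_ u); rewrite !in_symdiff in_fset0; case: (u \in B); case: (u \in alpha z C).
rewrite addr0 eC alpha1 subrr /delta /ofSigma; congr (_, _).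
by apply/fsetP => u; rewrite !in_symdiff addbC addbA addbb.
Qed.

Definition phiS k (phi : Gamma k -> Gamma k) (H : Sigma k) : Sigma k := (phi (H, 0)).1.

Lemma phiSE k (phi : Gamma k -> Gamma k) H : is_aut phi -> phi (H, 0) = (phiS phi H, 0).
Proof. by move=> h; rewrite [LHS]surjective_pairing (phiSigma H h). Qed.

Lemma phiSD k (phi : Gamma k -> Gamma k) A B : is_aut phi ->
  phiS phi (symdiff A B) = symdiff (phiS phi A) (phiS phi B).
Proof.
move=> h; have [_ hm] := h; rewrite {1}/phiS.
have -> : ((symdiff A B, 0) : Gamma k) = gmul (A, 0) (B, 0) by rewrite /gmul /= alpha0 addr0.
by rewrite hm (phiSE A h) (phiSE B h) /gmul /= alpha0.
Qed.

Lemma disj_symdiff k (x : Zk k) (X : Sigma k) : x \notin X -> x |` X = symdiff [fset x] X.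
Proof.
move=> xX; apply/fsetP => u; rewrite in_symdiff !inE.
by case: (eqVneq u x) => [->|]; [rewrite (negbTE xX) | ].
Qed.

Lemma psi_inj k (phi : Gamma k -> Gamma k) (x0 : Zk k) : is_aut phi ->
  phi (delta 0) = delta x0 -> injective (fun y => phibar phi y + x0).
Proof.
move=> h hx0 y1 y2 e.
have [[g gK _] _] := h.
have : phi (delta y1) = phi (delta y2) by rewrite !(phi_delta _ h hx0) e.
move=> /(congr1 g); rewrite !gK /delta /ofSigma => -[]; exact: fset1_inj.
Qed.

Lemma phiS_im k (phi : Gamma k -> Gamma k) (x0 : Zk k) H : is_aut phi ->
  phi (delta 0) = delta x0 -> phiS phi H = [fset (phibar phi y + x0) | y in H].
Proof.
move=> h hx0; elim/fset1U_rect: H => [|x X xX IH].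
  by rewrite /phiS -/(gone k) phi1 // imfset0.
rewrite imfsetU1 disj_symdiff // disj_symdiff; last first.
  by apply/imfsetP => -[y yX /(psi_inj h hx0) e]; move: yX; rewrite -e (negbTE xX).
rewrite phiSD // IH; congr symdiff.
by rewrite /phiS -/(ofSigma [fset x]) -/(delta x) (phi_delta _ h hx0).
Qed.

Definition Inv k (phi : Gamma k -> Gamma k) (g g' : Gamma k) :=
  g.2 = g'.2 /\ (g.2 = 0 -> exists H, g'.1 = symdiff g.1 (symdiff H (phiS phi H))).

Lemma reid_inv k (phi : Gamma k -> Gamma k) g g' : is_aut phi ->
  same_reid_class phi g g' -> Inv phi g g'.
Proof.
move=> h; elim => {g g'}.
- move=> g g' [H ->]; rewrite /ginv /ofSigma /= oppr0 alpha0 (phiSE H h) /gmul /=.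
  split; first by rewrite addr0 add0r.
  move=> g0; rewrite g0 addr0 !alpha0; exists H.
  rewrite /=; apply/fsetP => u; rewrite !in_symdiff.
  by case: (u \in H); case: (u \in g.1); case: (u \in phiS phi H).
- move=> g; split=> // _; exists fset0.
  by rewrite /phiS -/(gone k) phi1 // symdiff0l symdiff0r.
- move=> g g' _ [e2 e1]; split=> // g'0; have [H ->] := e1 (etrans e2 g'0).
  exists H; apply/fsetP => u; rewrite !in_symdiff.
  by case: (u \in H); case: (u \in g.1); case: (u \in phiS phi H).
- move=> g g' g'' _ [e2 e1] _ [f2 f1]; split; first by rewrite e2.
  move=> g0; have [H eH] := e1 g0; have [K eK] := f1 (etrans (esym e2) g0).
  exists (symdiff H K); rewrite eK eH (phiSD _ _ h).
  apply/fsetP => u; rewrite !in_symdiff.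
  by case: (u \in H); case: (u \in g.1); case: (u \in phiS phi H); case: (u \in K); case: (u \in phiS phi K).
Qed.
Local Close Scope ring_scope.

Lemma iter_shift (T : Type) (f : T -> T) (finj : injective f) y i d :
  iter i f y = iter (i + d) f y -> y = iter d f y.
Proof.
elim: i => [//|i IH]; rewrite addSn !iterS => /finj; exact: IH.
Qed.

Lemma forward (T : choiceType) (f : T -> T) (finj : injective f) (H : {fset T}) y :
  y \in H -> y \notin [fset f x | x in H] ->
  exists n, (iter n f y \in [fset f x | x in H]) && (iter n f y \notin H).
Proof.
move=> yH yfH.
case: (boolP [exists n : 'I_(#|` H|.+2), (iter n f y \in [fset f x | x in H]) && (iter n f y \notin H)]).
  by case/existsP => n hn; exists n.
move=> /existsPn hno.
have allH : forall n, (n <= #|` H|)%N -> iter n f y \in H.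
  elim=> [//|n IH] hn.
  have hn' : (n.+1 < #|` H|.+2)%N by rewrite ltnS (leq_trans hn).
  have := hno (Ordinal hn'); rewrite /= negb_and negbK.
  by rewrite in_imfset //= IH // ltnW.
pose s := [seq iter n f y | n <- iota 0 #|` H|.+1].
have sH : {subset s <= enum_fset H}.
  by move=> u /mapP [n]; rewrite mem_iota add0n /= => hn ->; apply: allH.
have : ~~ uniq s.
  apply/negP => us; have := uniq_leq_size us sH.
  by rewrite size_map size_iota ltnn.
case/(uniqPn y) => i [j [ij js]].
rewrite size_map size_iota in js.
rewrite !(nth_map 0%N) ?size_iota ?(ltn_trans ij) // !nth_iota ?(ltn_trans ij) // !add0n.
rewrite -(subnKC (ltnW ij)) => /(iter_shift finj).
have dpos : (0 < j - i)%N by rewrite subn_gt0.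
have dle : ((j - i).-1 <= #|` H|)%N.
  by rewrite -ltnS prednK // (leq_trans (leq_subr i j) (ltnW js)).
case: (j - i)%N dpos dle => [//|d] _ /= dle e.
by move: yfH; rewrite [X in X \notin _]e in_imfset //= allH.
Qed.

Lemma comb (T : choiceType) (f : T -> T) (finj : injective f) (H : {fset T}) x1 x2 :
  (forall u, (u == x1) (+) (u == x2) = (u \in H) (+) (u \in [fset f x | x in H])) ->
  exists n, iter n f x1 = x2 \/ iter n f x2 = x1.
Proof.
move=> hu.
case: (eqVneq x1 x2) => [<-|ne]; first by exists 0%N; left.
have h1 := hu x1; have h2 := hu x2.
rewrite eqxx (negbTE ne) in h1; rewrite eqxx eq_sym (negbTE ne) in h2.
case x1H: (x1 \in H) in h1.
  have x1f : x1 \notin [fset f x | x in H] by move: h1; case: (_ \in [fset _ | _ in _]).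
  have [n /andP [n1 n2]] := forward finj x1H x1f.
  exists n; left; have := hu (iter n f x1); rewrite n1 (negbTE n2) /=.
  case: (eqVneq (iter n f x1) x1) => [e|_ /= /eqP //]; by move: n1; rewrite e (negbTE x1f).
case x2H: (x2 \in H) in h2.
  have x2f : x2 \notin [fset f x | x in H] by move: h2; case: (_ \in [fset _ | _ in _]).
  have [n /andP [n1 n2]] := forward finj x2H x2f.
  exists n; right; have := hu (iter n f x2); rewrite n1 (negbTE n2) /=.
  case: (eqVneq (iter n f x2) x2) => [e|_]; first by move: n1; rewrite e (negbTE x2f).
  by rewrite addbF => /eqP.
exfalso.
have sub : H `<=` [fset f x | x in H].
  apply/fsubsetP => u uH; have := hu u; rewrite uH.
  case: (eqVneq u x1) => [e|_]; first by rewrite e x1H in uH.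
  case: (eqVneq u x2) => [e|_]; first by rewrite e x2H in uH.
  by case: (u \in [fset _ | _ in _]).
have cardE : #|` H| = #|` [fset f x | x in H]| by rewrite card_imfset.
have /(fsubset_cardP cardE) eqs := sub.
by move: h1; rewrite -eqs x1H.
Qed.
Local Open Scope ring_scope.

Lemma phibar_sum k (phi : Gamma k -> Gamma k) n (F : nat -> Zk k) : is_aut phi ->
  phibar phi (\sum_(i < n) F i) = \sum_(i < n) phibar phi (F i).
Proof.
move=> h; elim: n => [|n IH]; first by rewrite !big_ord0 phibar0.
by rewrite !big_ord_recr /= phibarD // IH.
Qed.

Lemma iter_psi k (phi : Gamma k -> Gamma k) x0 x n : is_aut phi ->
  iter n (fun y => phibar phi y + x0) x =
  iter n (phibar phi) x + \sum_(i < n) iter i (phibar phi) x0.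
Proof.
move=> h; elim: n => [|n IH]; first by rewrite big_ord0 addr0.
rewrite [LHS]/= IH phibarD // phibar_sum // big_ord_recl.
have -> : iter n.+1 (phibar phi) x = phibar phi (iter n (phibar phi) x) by [].
rewrite -addrA; congr (_ + _); rewrite addrC; congr (_ + _).
Qed.

Theorem lemma2p2 (k : nat) (hk : (0 < k)%N) (phi : Gamma k -> Gamma k)
  (hphi : is_aut phi) (x0 : 'rV[int]_k) (hx0 : phi (delta 0) = delta x0)
  (x1 x2 : 'rV[int]_k) :
  same_reid_class phi (delta x1) (delta x2) ->
  exists t : nat,
    iter t (phibar phi) x1 + \sum_(i < t) iter i (phibar phi) x0 = x2 \/
    iter t (phibar phi) x2 + \sum_(i < t) iter i (phibar phi) x0 = x1.
Proof.
move=> /(reid_inv hphi) [_ /(_ erefl) [H]].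
rewrite /= (phiS_im H hphi hx0) => eH.
have hu : forall u, (u == x1) (+) (u == x2) =
    (u \in H) (+) (u \in [fset (phibar phi y + x0) | y in H]).
  move=> u; move/fsetP: eH => /(_ u); rewrite in_symdiff in_symdiff !in_fset1 => ->.
  by case: (u == x1); case: (u \in H); case: (u \in [fset _ | _ in _]).
have [n hn] := comb (psi_inj hphi hx0) hu.
by exists n; rewrite -!iter_psi.
Qed.
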